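(* Let $X\subseteq R^n$ be an unbounded definable set. Then $X$ is not definably contractible.
   Context: Throughout, $\mathcal R=\langle R,<,+,0,\{x\mapsto\lambda x\}_{\lambda\in\Lambda}\rangle$ is an ordered vector space over an ordered division ring $\Lambda$; ''definable'' means definable in $\mathcal R$ with parameters; $R^n$ carries the product of the order topology. A set is bounded if it is contained in a box $(a_1,b_1)\times\dots\times(a_n,b_n)$ with $a_i,b_i\in R$. For definable $A\subseteq X$, $X$ deformation retracts to $A$ if there are $q\in R$, $q\ge0$, and a definable continuous $H:[0,q]\times X\to X$ with $H(0,X)=A$, $H(t,a)=a$ for all $t\in[0,q]$, $a\in A$, and $H(q,x)=x$ for all $x\in X$; $X$ is definably contractible if it deformation retracts to a singleton contained in $X$. *)

(* Defs.v *)
From HB Require Import structures.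
From mathcomp Require Import all_boot all_order all_algebra.
Set Implicit Arguments. Unset Strict Implicit. Unset Printing Implicit Defensive.
Import GRing.Theory.
Local Open Scope ring_scope.

Definition strict_total_order (T : Type) (lt : T -> T -> Prop) : Prop :=
  (forall x, ~ lt x x) /\
  (forall x y z, lt x y -> lt y z -> lt x z) /\
  (forall x y, lt x y \/ x = y \/ lt y x).

Definition ordered_division_ring (L : unitRingType) (ltL : L -> L -> Prop) : Prop :=
  (forall l : L, l != 0 -> l \is a GRing.unit) /\
  strict_total_order ltL /\
  (forall a b c : L, ltL a b -> ltL (a + c) (b + c)) /\
  (forall a b : L, ltL 0 a -> ltL 0 b -> ltL 0 (a * b)).

Definition ordered_vector_space (L : unitRingType) (ltL : L -> L -> Prop)
    (R : lmodType L) (ltR : R -> R -> Prop) : Prop :=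
  strict_total_order ltR /\
  (forall x y z : R, ltR x y -> ltR (x + z) (y + z)) /\
  (forall (l : L) (x y : R), ltL 0 l -> ltR x y -> ltR (l *: x) (l *: y)).

Section Definability.
Variables (L : unitRingType) (R : lmodType L) (ltR : R -> R -> Prop).

Inductive term : Type :=
  | TVar of nat
  | TConst of R
  | TZero
  | TAdd of term & term
  | TScal of L & term.

Fixpoint teval (e : nat -> R) (t : term) : R :=
  match t with
  | TVar i => e i
  | TConst c => c
  | TZero => 0
  | TAdd s u => teval e s + teval e u
  | TScal l s => l *: teval e s
  end.

Inductive formula : Type :=
  | FLt of term & term
  | FEq of term & term
  | FNot of formula
  | FAnd of formula & formula
  | FOr of formula & formula
  | FEx of nat & formula.

Fixpoint holds (e : nat -> R) (f : formula) : Prop :=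
  match f with
  | FLt s u => ltR (teval e s) (teval e u)
  | FEq s u => teval e s = teval e u
  | FNot g => ~ holds e g
  | FAnd g h => holds e g /\ holds e h
  | FOr g h => holds e g \/ holds e h
  | FEx i g => exists r : R, holds (fun k => if k == i then r else e k) g
  end.

(* Points of R^n are functions 'I_n -> R; variable k is the k-th coordinate. *)
Definition env_of (n : nat) (x : 'I_n -> R) : nat -> R :=
  fun k => match (insub k : option 'I_n) with Some i => x i | None => 0 end.

Definition definable (n : nat) (S : ('I_n -> R) -> Prop) : Prop :=
  exists f : formula, forall x : 'I_n -> R, S x <-> holds (env_of x) f.

Definition lpart (m k : nat) (z : 'I_(m + k) -> R) : 'I_m -> R :=
  fun i => z (lshift k i).
Definition rpart (m k : nat) (z : 'I_(m + k) -> R) : 'I_k -> R :=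
  fun j => z (rshift m j).

Definition definable_map (m k : nat) (D : ('I_m -> R) -> Prop)
    (f : ('I_m -> R) -> ('I_k -> R)) : Prop :=
  definable (fun z : 'I_(m + k) -> R =>
    D (lpart z) /\ forall j, rpart z j = f (lpart z) j).

(* Continuity of f restricted to D, for the product of the order topology
   (basic open sets: open boxes; R is assumed to have no endpoints). *)
Definition continuous_on (m k : nat) (D : ('I_m -> R) -> Prop)
    (f : ('I_m -> R) -> ('I_k -> R)) : Prop :=
  forall w, D w ->
  forall a b : 'I_k -> R, (forall j, ltR (a j) (f w j) /\ ltR (f w j) (b j)) ->
  exists c d : 'I_m -> R, (forall i, ltR (c i) (w i) /\ ltR (w i) (d i)) /\
    forall v, D v -> (forall i, ltR (c i) (v i) /\ ltR (v i) (d i)) ->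
      forall j, ltR (a j) (f v j) /\ ltR (f v j) (b j).

Definition bounded (n : nat) (X : ('I_n -> R) -> Prop) : Prop :=
  exists a b : 'I_n -> R, forall x, X x -> forall i, ltR (a i) (x i) /\ ltR (x i) (b i).

Definition le_R (x y : R) : Prop := x = y \/ ltR x y.

Definition tfirst (n : nat) (w : 'I_(1 + n) -> R) : R := w (lshift n ord0).
Definition tlast (n : nat) (w : 'I_(1 + n) -> R) : 'I_n -> R := fun j => w (rshift 1 j).

Definition deformation_retracts (n : nat) (X A : ('I_n -> R) -> Prop) : Prop :=
  (forall a, A a -> X a) /\ definable A /\
  exists q : R, le_R 0 q /\
  exists H : R -> ('I_n -> R) -> ('I_n -> R),
    let D := fun w : 'I_(1 + n) -> R =>
      le_R 0 (tfirst w) /\ le_R (tfirst w) q /\ X (tlast w) in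
    let Hw := fun w : 'I_(1 + n) -> R => H (tfirst w) (tlast w) in
    definable_map D Hw /\ continuous_on D Hw /\
    (forall t x, le_R 0 t -> le_R t q -> X x -> X (H t x)) /\
    (forall x, X x -> A (H 0 x)) /\
    (forall a, A a -> exists x, X x /\ forall j, H 0 x j = a j) /\
    (forall t a, le_R 0 t -> le_R t q -> A a -> forall j, H t a j = a j) /\
    (forall x, X x -> forall j, H q x j = x j).

Definition definably_contractible (n : nat) (X : ('I_n -> R) -> Prop) : Prop :=
  exists p : 'I_n -> R, X p /\ deformation_retracts X (fun y => forall j, y j = p j).

End Definability.

(* Main.v *)
Require Import Defs.
From HB Require Import structures.
From mathcomp Require Import all_boot all_order all_algebra.
From mathcomp Require Import zify.
From Stdlib Require Import Classical ClassicalEpsilon FunctionalExtensionality.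
From Stdlib Require List.
Set Implicit Arguments. Unset Strict Implicit. Unset Printing Implicit Defensive.
Import GRing.Theory.
Local Open Scope ring_scope.

Section Ord.
Variables (L : unitRingType) (ltL : L -> L -> Prop) (R : lmodType L) (ltR : R -> R -> Prop).
Hypothesis hL : ordered_division_ring ltL.
Hypothesis hR : ordered_vector_space ltL ltR.

Lemma Lirr (x : L) : ~ ltL x x. Proof. by case: hL => _ [[? _] _]. Qed.
Lemma Ltr (x y z : L) : ltL x y -> ltL y z -> ltL x z. Proof. by case: hL => _ [[_ [? _]] _]; eauto. Qed.
Lemma Ltot (x y : L) : ltL x y \/ x = y \/ ltL y x. Proof. by case: hL => _ [[_ [_ ?]] _]. Qed.
Lemma LaddR (a b c : L) : ltL a b -> ltL (a + c) (b + c). Proof. by case: hL => _ [_ [? _]]; auto. Qed.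
Lemma Lmul (a b : L) : ltL 0 a -> ltL 0 b -> ltL 0 (a * b). Proof. by case: hL => _ [_ [_ ?]]; auto. Qed.
Lemma Lunit (l : L) : l != 0 -> l \is a GRing.unit. Proof. by case: hL => ? _; auto. Qed.

Lemma LaddL (a b c : L) : ltL a b -> ltL (c + a) (c + b).
Proof. by move=> h; rewrite ![c + _]addrC; apply: LaddR. Qed.
Lemma Lsub0 (a b : L) : ltL a b -> ltL 0 (b - a).
Proof. by move=> h; have := LaddR (- a) h; rewrite subrr. Qed.
Lemma Lsub0' (a b : L) : ltL 0 (b - a) -> ltL a b.
Proof. by move=> h; have := LaddR a h; rewrite add0r subrK. Qed.
Lemma Lopp (a b : L) : ltL a b -> ltL (- b) (- a).
Proof. move=> h; have := LaddR (- a - b) h.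
have -> : a + (- a - b) = - b by rewrite addrA subrr add0r.
by rewrite addrC subrK. Qed.
Lemma Lneg (a : L) : ltL a 0 -> ltL 0 (- a).
Proof. by move/Lopp; rewrite oppr0. Qed.
Lemma Lneg' (a : L) : ltL 0 (- a) -> ltL a 0.
Proof. by move/Lopp; rewrite oppr0 opprK. Qed.
Lemma Lneq (a b : L) : ltL a b -> a != b.
Proof. by move=> h; apply/eqP => e; subst; exact: Lirr h. Qed.
Lemma L01 : ltL 0 1.
Proof.
case: (Ltot 0 1) => [//|[e|h]]; first by move: (oner_neq0 L); rewrite -e eqxx.
have h1 := Lneg h; have := Lmul h1 h1; rewrite mulrNN mulr1 => h2.
by case: (Lirr (Ltr h h2)).
Qed.
Lemma Lnz (a : L) : ltL 0 a -> a != 0. Proof. by move=> h; rewrite eq_sym; apply: Lneq. Qed.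
Lemma Linv (a : L) : ltL 0 a -> ltL 0 a^-1.
Proof.
move=> h; have ua := Lunit (Lnz h).
case: (Ltot 0 a^-1) => [//|[e|h2]].
  by have := mulrV ua; rewrite -e mulr0 => /eqP; rewrite eq_sym oner_eq0.
have := Lmul h (Lneg h2); rewrite mulrN mulrV // => h3.
by case: (Lirr (Ltr (Lneg' h3) L01)).
Qed.
Lemma Ladd0 (a b : L) : ltL 0 a -> ltL 0 b -> ltL 0 (a + b).
Proof. move=> ha hb; apply: Ltr ha _; have := LaddL a hb; by rewrite addr0. Qed.
Definition leL (a b : L) := a = b \/ ltL a b.
Lemma leLadd0 (a b : L) : leL 0 a -> leL 0 b -> leL 0 (a + b).
Proof. case=> [<-|ha]; first by rewrite add0r.
case=> [<-|hb]; first by rewrite addr0; right.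
by right; apply: Ladd0. Qed.

Lemma Rirr (x : R) : ~ ltR x x. Proof. by case: hR => [[? _] _]. Qed.
Lemma Rtr (x y z : R) : ltR x y -> ltR y z -> ltR x z. Proof. by case: hR => [[_ [? _]] _]; eauto. Qed.
Lemma Rtot (x y : R) : ltR x y \/ x = y \/ ltR y x. Proof. by case: hR => [[_ [_ ?]] _]. Qed.
Lemma RaddR (x y z : R) : ltR x y -> ltR (x + z) (y + z). Proof. by case: hR => _ [? _]; auto. Qed.
Lemma Rscale (l : L) (x y : R) : ltL 0 l -> ltR x y -> ltR (l *: x) (l *: y). Proof. by case: hR => _ [_ ?]; auto. Qed.
Lemma RaddL (x y z : R) : ltR x y -> ltR (z + x) (z + y).
Proof. by move=> h; rewrite ![z + _]addrC; apply: RaddR. Qed.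
Lemma Radd2 (a b c d : R) : ltR a b -> ltR c d -> ltR (a + c) (b + d).
Proof. move=> h1 h2; apply: Rtr (RaddR c h1) (RaddL b h2). Qed.
Lemma Rneq (x y : R) : ltR x y -> x <> y. Proof. by move=> h e; subst; exact: Rirr h. Qed.
Lemma Rsub0 (a b : R) : ltR a b -> ltR 0 (b - a).
Proof. by move=> h; have := RaddR (- a) h; rewrite subrr. Qed.
Lemma Rsub0' (a b : R) : ltR 0 (b - a) -> ltR a b.
Proof. by move=> h; have := RaddR a h; rewrite add0r subrK. Qed.
Lemma Rsubn (a b : R) : ltR a b -> ltR (a - b) 0.
Proof. by move=> h; have := RaddR (- b) h; rewrite subrr. Qed.
Lemma Rsubn' (a b : R) : ltR (a - b) 0 -> ltR a b.
Proof. by move=> h; have := RaddR b h; rewrite add0r subrK. Qed.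
Lemma Ropp (a b : R) : ltR a b -> ltR (- b) (- a).
Proof. move=> h; have := RaddR (- a - b) h.
have -> : a + (- a - b) = - b by rewrite addrA subrr add0r.
by rewrite addrC subrK. Qed.
Lemma Rneg (a : R) : ltR a 0 -> ltR 0 (- a). Proof. by move/Ropp; rewrite oppr0. Qed.
Lemma Rneg' (a : R) : ltR 0 (- a) -> ltR a 0. Proof. by move/Ropp; rewrite oppr0 opprK. Qed.
Lemma Rpos' (a : R) : ltR (- a) 0 -> ltR 0 a. Proof. by move/Ropp; rewrite oppr0 opprK. Qed.

Lemma Rscale_pp (l : L) (x : R) : ltL 0 l -> ltR 0 x -> ltR 0 (l *: x).
Proof. by move=> hl hx; have := Rscale hl hx; rewrite scaler0. Qed.
Lemma Rscale_pn (l : L) (x : R) : ltL 0 l -> ltR x 0 -> ltR (l *: x) 0.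
Proof. by move=> hl hx; have := Rscale hl hx; rewrite scaler0. Qed.
Lemma Rscale_np (l : L) (x : R) : ltL l 0 -> ltR 0 x -> ltR (l *: x) 0.
Proof. by move=> hl hx; apply: Rneg'; rewrite -scaleNr; apply: Rscale_pp => //; apply: Lneg. Qed.
Lemma Rscale_nn (l : L) (x : R) : ltL l 0 -> ltR x 0 -> ltR 0 (l *: x).
Proof. by move=> hl hx; apply: Rpos'; rewrite -scaleNr; apply: Rscale_pn => //; apply: Lneg. Qed.

Lemma Rscale_inv (l : L) (x y : R) : ltL 0 l -> ltR (l *: x) (l *: y) -> ltR x y.
Proof. move=> hl h; have := Rscale (Linv hl) h.
by rewrite !scalerA mulVr ?scale1r //; apply: Lunit; apply: Lnz. Qed.

Lemma unit_scale_eq0 (l : L) (x : R) : l != 0 -> l *: x = 0 -> x = 0.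
Proof. move=> hl h; have := congr1 (fun v => l^-1 *: v) h.
by rewrite scalerA mulVr ?scale1r ?scaler0 //; apply: Lunit. Qed.

Definition two : L := 1 + 1.
Lemma two_pos : ltL 0 two. Proof. exact: Ladd0 L01 L01. Qed.
Definition halfL : L := two^-1.
Lemma half_pos : ltL 0 halfL. Proof. exact: Linv two_pos. Qed.
Lemma half_double (x : R) : halfL *: (x + x) = x.
Proof. rewrite -{1 2}(scale1r x) -scalerDl scalerA mulVr ?scale1r //.
by apply: Lunit; apply: Lnz; exact: two_pos. Qed.
Lemma mid_l (a b : R) : ltR a b -> ltR a (halfL *: (a + b)).
Proof. move=> h; rewrite -{1}(half_double a); apply: Rscale half_pos _; exact: RaddL. Qed.
Lemma mid_r (a b : R) : ltR a b -> ltR (halfL *: (a + b)) b.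
Proof. move=> h; rewrite -{2}(half_double b); apply: Rscale half_pos _; exact: RaddR. Qed.
Lemma mid_same (a : R) : halfL *: (a + a) = a. Proof. exact: half_double. Qed.

End Ord.


Section Syn.
Variables (L : unitRingType) (ltL : L -> L -> Prop) (R : lmodType L) (ltR : R -> R -> Prop).
Hypothesis hL : ordered_division_ring ltL.
Hypothesis hR : ordered_vector_space ltL ltR.
Variable d0 : R.
Hypothesis hd0 : ltR 0 d0.

Definition upd (e : nat -> R) (i : nat) (x : R) : nat -> R :=
  fun k => if k == i then x else e k.

Lemma upd_upd e i x y : upd (upd e i x) i y = upd e i y.
Proof. by apply: functional_extensionality => k; rewrite /upd; case: (k == i). Qed.
Lemma upd_same e i x : upd e i x i = x. Proof. by rewrite /upd eqxx. Qed.
Lemma upd_other e i j x : j != i -> upd e i x j = e j.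
Proof. by rewrite /upd => /negbTE ->. Qed.
Lemma upd_comm e i j x y : i != j -> upd (upd e i x) j y = upd (upd e j y) i x.
Proof. move=> hij; apply: functional_extensionality => k; rewrite /upd.
case: (eqVneq k j) => [->|]; last by [].
by rewrite eq_sym (negbTE hij). Qed.

Fixpoint coef (i : nat) (s : term R) : L :=
  match s with
  | TVar j => if j == i then 1 else 0
  | TConst _ => 0
  | TZero => 0
  | TAdd a b => coef i a + coef i b
  | TScal l a => l * coef i a
  end.

Lemma tdecomp e i s : teval e s = coef i s *: e i + teval (upd e i 0) s.
Proof.
elim: s => [j|c||a iha b ihb|l a iha] /=.
- rewrite /upd; case: (eqVneq j i) => [->|]; first by rewrite scale1r addr0.
  by rewrite scale0r add0r.
- by rewrite scale0r add0r.
- by rewrite scale0r add0r.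
- by rewrite iha ihb scalerDl addrACA.
- by rewrite iha scalerDr scalerA.
Qed.

Fixpoint tsubst (i : nat) (b : term R) (s : term R) : term R :=
  match s with
  | TVar j => if j == i then b else TVar R j
  | TConst c => TConst c
  | TZero => TZero R
  | TAdd a c => TAdd (tsubst i b a) (tsubst i b c)
  | TScal l a => TScal l (tsubst i b a)
  end.

Lemma teval_subst e i b s : teval e (tsubst i b s) = teval (upd e i (teval e b)) s.
Proof.
elim: s => [j|c||a iha c ihc|l a iha] /=; last 2 first.
- by rewrite iha ihc.
- by rewrite iha.
- by rewrite /upd; case: (j == i).
- by [].
- by [].
Qed.

Fixpoint qf (f : formula R) : Prop :=
  match f with
  | FLt _ _ => True
  | FEq _ _ => True
  | FNot g => qf g
  | FAnd g h => qf g /\ qf h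
  | FOr g h => qf g /\ qf h
  | FEx _ _ => False
  end.

Fixpoint fsubst (i : nat) (b : term R) (f : formula R) : formula R :=
  match f with
  | FLt s u => FLt (tsubst i b s) (tsubst i b u)
  | FEq s u => FEq (tsubst i b s) (tsubst i b u)
  | FNot g => FNot (fsubst i b g)
  | FAnd g h => FAnd (fsubst i b g) (fsubst i b h)
  | FOr g h => FOr (fsubst i b g) (fsubst i b h)
  | FEx j g => FEx j g
  end.

Lemma qf_fsubst i b f : qf f -> qf (fsubst i b f).
Proof.
elim: f => [s u|s u|g ih|g ihg h ihh|g ihg h ihh|j g ih] //=.
- by case=> ? ?; split; auto.
- by case=> ? ?; split; auto.
Qed.

Lemma holds_subst e i b f : qf f ->
  (holds ltR e (fsubst i b f) <-> holds ltR (upd e i (teval e b)) f).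
Proof.
elim: f e => [s u|s u|g ih|g ihg h ihh|g ihg h ihh|j g ih] e /= hq.
- by rewrite !teval_subst.
- by rewrite !teval_subst.
- by rewrite ih.
- by case: hq => h1 h2; rewrite ihg // ihh.
- by case: hq => h1 h2; rewrite ihg // ihh.
- by [].
Qed.

Fixpoint atoms (f : formula R) : list (term R * term R) :=
  match f with
  | FLt s u => [:: (s, u)]
  | FEq s u => [:: (s, u)]
  | FNot g => atoms g
  | FAnd g h => atoms g ++ atoms h
  | FOr g h => atoms g ++ atoms h
  | FEx _ g => atoms g
  end.

Definition acoef i (a : term R * term R) : L := coef i a.1 - coef i a.2.
Definition arest e i (a : term R * term R) : R :=
  teval (upd e i 0) a.1 - teval (upd e i 0) a.2.
Definition rootv e i a : R := - ((acoef i a)^-1 *: arest e i a).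
Definition rootT i (a : term R * term R) : term R :=
  TScal (- (acoef i a)^-1)
    (TAdd (tsubst i (TZero R) a.1) (TScal (-1) (tsubst i (TZero R) a.2))).

Lemma adecomp e i a : teval e a.1 - teval e a.2 = acoef i a *: e i + arest e i a.
Proof. rewrite (tdecomp e i a.1) (tdecomp e i a.2) /acoef /arest scalerBl.
by rewrite opprD !addrA; congr (_ + _); rewrite addrAC. Qed.

Lemma teval_rootT e i a : teval e (rootT i a) = rootv e i a.
Proof. rewrite /= !teval_subst /= scaleN1r /rootv /arest scaleNr; congr (- (_ *: _)). Qed.

Lemma arest_upd e i x a : arest (upd e i x) i a = arest e i a.
Proof. by rewrite /arest upd_upd. Qed.
Lemma rootv_upd e i x a : rootv (upd e i x) i a = rootv e i a.
Proof. by rewrite /rootv arest_upd. Qed.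

Lemma aval_root e i a x : acoef i a != 0 ->
  acoef i a *: x + arest e i a = acoef i a *: (x - rootv e i a).
Proof. move=> hc; rewrite /rootv opprK scalerDr scalerA mulrV ?scale1r //.
exact: (Lunit hL). Qed.

End Syn.


Section QE.
Variables (L : unitRingType) (ltL : L -> L -> Prop) (R : lmodType L) (ltR : R -> R -> Prop).
Hypothesis hL : ordered_division_ring ltL.
Hypothesis hR : ordered_vector_space ltL ltR.
Variable d0 : R.
Hypothesis hd0 : ltR 0 d0.

Lemma Rasym (a b : R) : ltR a b -> ~ ltR b a.
Proof. by move=> h1 h2; exact: (Rirr hR (Rtr hR h1 h2)). Qed.
Lemma le_lt (a b c : R) : le_R ltR a b -> ltR b c -> ltR a c.
Proof. by case=> [->//|h] h2; exact: (Rtr hR h h2). Qed.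
Lemma lt_le (a b c : R) : ltR a b -> le_R ltR b c -> ltR a c.
Proof. by move=> h; case=> [<-//|h2]; exact: (Rtr hR h h2). Qed.

Lemma iff_t (P Q : Prop) : P -> Q -> (P <-> Q). Proof. tauto. Qed.
Lemma iff_f (P Q : Prop) : ~ P -> ~ Q -> (P <-> Q). Proof. tauto. Qed.

Lemma sign_same (c : L) (w w' : R) : c != 0 ->
  ((ltR w 0 /\ ltR w' 0) \/ (ltR 0 w /\ ltR 0 w')) ->
  (ltR (c *: w) 0 <-> ltR (c *: w') 0) /\ (c *: w = 0 <-> c *: w' = 0).
Proof.
move=> hc hw.
have nz : forall v, (ltR v 0 \/ ltR 0 v) -> c *: v <> 0.
  move=> v hv e; have := unit_scale_eq0 hL hc e => v0; subst v.
  by case: hv => h; exact: (Rirr hR h).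
split; last first.
  by case: hw => [[h1 h2]|[h1 h2]]; apply: iff_f; apply: nz; auto.
case: (Ltot hL c 0) => [cn|[ce|cp]]; last 2 first.
- by move: hc; rewrite ce eqxx.
- case: hw => [[h1 h2]|[h1 h2]].
    by apply: iff_t; apply: (Rscale_pn hR).
  by apply: iff_f; apply: Rasym; apply: (Rscale_pp hR).
- case: hw => [[h1 h2]|[h1 h2]].
    by apply: iff_f; apply: Rasym; apply: (Rscale_nn hL hR).
  by apply: iff_t; apply: (Rscale_np hL hR).
Qed.

Definition sside (x y r : R) := (ltR x r /\ ltR y r) \/ (ltR r x /\ ltR r y).

Lemma atom_val e i x (a : term R * term R) :
  teval (upd e i x) a.1 - teval (upd e i x) a.2 = acoef i a *: x + arest e i a.
Proof. by rewrite (adecomp _ i) upd_same arest_upd. Qed.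

Lemma ltR_sub (p q : R) : ltR p q <-> ltR (p - q) 0.
Proof. by split; [apply: (Rsubn hR) | apply: (Rsubn' hR)]. Qed.
Lemma eq_sub (p q : R) : p = q <-> p - q = 0.
Proof. by split => [->|/eqP]; [rewrite subrr | rewrite subr_eq0 => /eqP]. Qed.

Lemma atom_same e i x y (a : term R * term R) :
  (acoef i a != 0 -> sside x y (rootv e i a)) ->
  (ltR (acoef i a *: x + arest e i a) 0 <-> ltR (acoef i a *: y + arest e i a) 0) /\
  (acoef i a *: x + arest e i a = 0 <-> acoef i a *: y + arest e i a = 0).
Proof.
move=> hs; case: (eqVneq (acoef i a) 0) => [->|hc].
  by rewrite !scale0r !add0r.
rewrite !(aval_root hL) //; apply: sign_same => //.
case: (hs hc) => [[h1 h2]|[h1 h2]].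
  by left; split; apply: (Rsubn hR).
by right; split; apply: (Rsub0 hR).
Qed.

Lemma SI f e i x y : qf f ->
  (forall a, List.In a (atoms f) -> acoef i a != 0 -> sside x y (rootv e i a)) ->
  (holds ltR (upd e i x) f <-> holds ltR (upd e i y) f).
Proof.
elim: f => [s u|s u|g ih|g ihg h ihh|g ihg h ihh|j g ih] /= hq hs.
- rewrite (ltR_sub (teval (upd e i x) s)) (ltR_sub (teval (upd e i y) s)); have := atom_val e i x (s, u); have := atom_val e i y (s, u).
  move=> /= -> ->.
  have hs' : acoef i (s, u) != 0 -> sside x y (rootv e i (s, u)) by apply: hs; left.
  exact: (proj1 (atom_same hs')).
- rewrite (eq_sub (teval (upd e i x) s)) (eq_sub (teval (upd e i y) s)).
  have := atom_val e i x (s, u); have := atom_val e i y (s, u).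
  move=> /= -> ->.
  have hs' : acoef i (s, u) != 0 -> sside x y (rootv e i (s, u)) by apply: hs; left.
  exact: (proj2 (atom_same hs')).
- by rewrite (ih hq hs).
- case: hq => h1 h2.
  have H1 : forall a, List.In a (atoms g) -> acoef i a != 0 -> sside x y (rootv e i a).
    by move=> a ha; apply: hs; apply: List.in_or_app; left.
  have H2 : forall a, List.In a (atoms h) -> acoef i a != 0 -> sside x y (rootv e i a).
    by move=> a ha; apply: hs; apply: List.in_or_app; right.
  by rewrite (ihg h1 H1) (ihh h2 H2).
- case: hq => h1 h2.
  have H1 : forall a, List.In a (atoms g) -> acoef i a != 0 -> sside x y (rootv e i a).
    by move=> a ha; apply: hs; apply: List.in_or_app; left.
  have H2 : forall a, List.In a (atoms h) -> acoef i a != 0 -> sside x y (rootv e i a).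
    by move=> a ha; apply: hs; apply: List.in_or_app; right.
  by rewrite (ihg h1 H1) (ihh h2 H2).
- by [].
Qed.

Lemma list_max (T : Type) (F : T -> R) (P : T -> Prop) (l : list T) :
  (exists a, List.In a l /\ P a) ->
  exists m, List.In m l /\ P m /\ forall a, List.In a l -> P a -> le_R ltR (F a) (F m).
Proof.
elim: l => [[a [[] _]]|b l ih] hex.
case: (classic (exists a, List.In a l /\ P a)) => [hl|hl].
  case: (ih hl) => m [m1 [m2 m3]].
  case: (classic (P b)) => pb; last first.
    exists m; split; [by right|split => //].
    by move=> a [<-|ha] pa; [by [] | exact: m3].
  case: (Rtot hR (F b) (F m)) => [hbm|[hbm|hbm]].
  - exists m; split; [by right|split => //].
    by move=> a [<-|ha] pa; [right | exact: m3].
  - exists m; split; [by right|split => //].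
    by move=> a [<-|ha] pa; [left | exact: m3].
  - exists b; split; [by left|split => //].
    move=> a [<-|ha] pa; first by left.
    by right; apply: le_lt (m3 a ha pa) hbm.
case: hex => a [[<-|ha] pa]; last by case: hl; exists a.
exists b; split; [by left|split => //].
by move=> c [<-|hc] pc; [left | case: hl; exists c].
Qed.

Lemma list_min (T : Type) (F : T -> R) (P : T -> Prop) (l : list T) :
  (exists a, List.In a l /\ P a) ->
  exists m, List.In m l /\ P m /\ forall a, List.In a l -> P a -> le_R ltR (F m) (F a).
Proof.
elim: l => [[a [[] _]]|b l ih] hex.
case: (classic (exists a, List.In a l /\ P a)) => [hl|hl].
  case: (ih hl) => m [m1 [m2 m3]].
  case: (classic (P b)) => pb; last first.
    exists m; split; [by right|split => //].
    by move=> a [<-|ha] pa; [by [] | exact: m3].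
  case: (Rtot hR (F b) (F m)) => [hbm|[hbm|hbm]].
  - exists b; split; [by left|split => //].
    move=> a [<-|ha] pa; first by left.
    by right; apply: lt_le hbm (m3 a ha pa).
  - exists m; split; [by right|split => //].
    by move=> a [<-|ha] pa; [left | exact: m3].
  - exists m; split; [by right|split => //].
    by move=> a [<-|ha] pa; [right | exact: m3].
case: hex => a [[<-|ha] pa]; last by case: hl; exists a.
exists b; split; [by left|split => //].
by move=> c [<-|hc] pc; [left | case: hl; exists c].
Qed.

Definition ffalse : formula R := FNot (FEq (TZero R) (TZero R)).
Definition bigor (l : list (formula R)) : formula R := List.fold_right (fun f acc => FOr f acc) ffalse l.

Lemma holds_bigor e l : holds ltR e (bigor l) <-> exists f, List.In f l /\ holds ltR e f.
Proof.
elim: l => [|g l ih] /=; first by split => [[]|[f [[] _]]].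
rewrite ih; split.
  by case=> [h|[f [hf h]]]; [exists g; split; [left|] | exists f; split; [right|]].
by case=> f [[<-|hf] h]; [left | right; exists f].
Qed.

Lemma qf_bigor l : (forall f, List.In f l -> qf f) -> qf (bigor l).
Proof. elim: l => [|g l ih] /= h; first by []. by split; auto. Qed.

Definition roots i f : list (term R) := TZero R :: List.map (rootT i) (atoms f).

Definition tests i f : list (term R) :=
  List.app (List.map (fun r => TAdd r (TConst d0)) (roots i f))
  (List.app (List.map (fun r => TAdd r (TScal (-1) (TConst d0))) (roots i f))
  (List.flat_map (fun r => List.map (fun r' => TScal (halfL L) (TAdd r r')) (roots i f)) (roots i f))).

Definition elim_ex i f : formula R := bigor (List.map (fun t => fsubst i t f) (tests i f)).

Lemma qf_elim i f : qf f -> qf (elim_ex i f).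
Proof. move=> hq; apply: qf_bigor => g /List.in_map_iff [t [<- _]]; exact: qf_fsubst. Qed.

Lemma root_in i f a : List.In a (atoms f) -> List.In (rootT i a) (roots i f).
Proof. by move=> h; right; apply: List.in_map. Qed.


Lemma lt_subd (v : R) : ltR (v - d0) v.
Proof. have h := RaddL hR v (Ropp hR hd0); move: h; by rewrite oppr0 addr0. Qed.
Lemma lt_addd (v : R) : ltR v (v + d0).
Proof. by have := RaddL hR v hd0; rewrite addr0. Qed.

Lemma FR f e i : qf f ->
  ((exists x, holds ltR (upd e i x) f) <-> holds ltR e (elim_ex i f)).
Proof.
move=> hq; rewrite /elim_ex holds_bigor; split; last first.
  case=> g [/List.in_map_iff [t [<- _]]]; rewrite holds_subst //.
  by move=> h; exists (teval e t).
case=> x hx.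
have ok : forall t, List.In t (tests i f) ->
   holds ltR (upd e i (teval e t)) f -> exists g, List.In g (List.map (fun t => fsubst i t f) (tests i f)) /\ holds ltR e g.
  move=> t ht h; exists (fsubst i t f); split; first exact: (List.in_map (fun t => fsubst i t f) _ _ ht).
  by rewrite holds_subst.
have hmid : forall r r', List.In r (roots i f) -> List.In r' (roots i f) ->
   List.In (TScal (halfL L) (TAdd r r')) (tests i f).
  move=> r r' h1 h2; rewrite /tests; apply: List.in_or_app; right; apply: List.in_or_app; right.
  apply/List.in_flat_map; exists r; split => //.
  exact: (List.in_map (fun r' => TScal (halfL L) (TAdd r r'))).
have hrt : forall a, teval e (rootT i a) = rootv e i a by move=> a; rewrite teval_rootT.
have ne : exists a, List.In a (roots i f) /\ True by exists (TZero R); split; [left|].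
have useSI : forall y, (forall a, List.In a (atoms f) -> acoef i a != 0 -> sside x y (rootv e i a)) ->
   holds ltR (upd e i y) f.
  by move=> y hs; apply: (proj1 (SI (x:=x) (y:=y) hq hs) hx).
case: (classic (exists r, List.In r (roots i f) /\ teval e r = x)) => [[r [hr er]]|nA].
  by apply: (ok _ (hmid r r hr hr)); rewrite /= (mid_same hL) er.
case: (classic (forall r, List.In r (roots i f) -> ltR x (teval e r))) => [hB|nB].
  case: (list_min (teval e) ne) => m [hm [_ hm3]].
  have ht : List.In (TAdd m (TScal (-1) (TConst d0))) (tests i f).
    rewrite /tests; apply: List.in_or_app; right; apply: List.in_or_app; left.
    exact: (List.in_map (fun r => TAdd r (TScal (-1) (TConst d0)))).
  apply: (ok _ ht); apply: useSI => a ha hc; left; split.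
    by rewrite -hrt; apply: hB; exact: root_in.
  rewrite /= scaleN1r -hrt.
  exact: (lt_le (lt_subd _) (hm3 _ (root_in i ha) I)).
case: (classic (forall r, List.In r (roots i f) -> ltR (teval e r) x)) => [hC|nC].
  case: (list_max (teval e) ne) => m [hm [_ hm3]].
  have ht : List.In (TAdd m (TConst d0)) (tests i f).
    rewrite /tests; apply: List.in_or_app; left.
    exact: (List.in_map (fun r => TAdd r (TConst d0))).
  apply: (ok _ ht); apply: useSI => a ha hc; right; split.
    by rewrite -hrt; apply: hC; exact: root_in.
  rewrite /= -hrt.
  exact: (le_lt (hm3 _ (root_in i ha) I) (lt_addd _)).
have nAr : forall r, List.In r (roots i f) -> teval e r <> x.
  by move=> r hr er; apply: nA; exists r.
have lo : exists r, List.In r (roots i f) /\ ltR (teval e r) x.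
  apply: NNPP => h; apply: nB => r hr.
  case: (Rtot hR x (teval e r)) => [//|[er|lt]]; first by case: (nAr r hr).
  by case: h; exists r.
have hi : exists r, List.In r (roots i f) /\ ltR x (teval e r).
  apply: NNPP => h; apply: nC => r hr.
  case: (Rtot hR x (teval e r)) => [lt|[er|//]]; last by case: (nAr r hr).
  by case: h; exists r.
case: (list_max (teval e) lo) => a [ha [ha2 ha3]].
case: (list_min (teval e) hi) => b [hb [hb2 hb3]].
have ab : ltR (teval e a) (teval e b) by exact: (Rtr hR ha2 hb2).
apply: (ok _ (hmid a b ha hb)); apply: useSI => c hc hcz.
have hcr := root_in i hc; rewrite -hrt.
case: (Rtot hR x (teval e (rootT i c))) => [lt|[er|gt]].
- left; split => //; rewrite /=; exact: (lt_le (mid_r hL hR ab) (hb3 _ hcr lt)).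
- by case: (nAr _ hcr).
- right; split => //; rewrite /=; exact: (le_lt (ha3 _ hcr gt) (mid_l hL hR ab)).
Qed.

Lemma qe f : exists g, qf g /\ forall e, holds ltR e f <-> holds ltR e g.
Proof.
elim: f => [s u|s u|g [g' [q1 h1]]|g [g' [q1 h1]] h [h' [q2 h2]]|g [g' [q1 h1]] h [h' [q2 h2]]|j g [g' [q1 h1]]].
- by exists (FLt s u); split.
- by exists (FEq s u); split.
- by exists (FNot g'); split => // e /=; rewrite h1.
- by exists (FAnd g' h'); split => // e /=; rewrite h1 h2.
- by exists (FOr g' h'); split => // e /=; rewrite h1 h2.
- exists (elim_ex j g'); split; first exact: qf_elim.
  move=> e; rewrite -FR //=; split; case=> r hr; exists r; move: hr; rewrite h1 //.
Qed.

End QE.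


Section Cont.
Variables (L : unitRingType) (ltL : L -> L -> Prop) (R : lmodType L) (ltR : R -> R -> Prop).
Hypothesis hL : ordered_division_ring ltL.
Hypothesis hR : ordered_vector_space ltL ltR.
Variable d0 : R.
Hypothesis hd0 : ltR 0 d0.
Variable Dom : R -> Prop.

Definition contW (F : R -> R) (u : R) := forall a b, ltR a (F u) -> ltR (F u) b ->
  exists c d, ltR c u /\ ltR u d /\ forall s, Dom s -> ltR c s -> ltR s d -> ltR a (F s) /\ ltR (F s) b.

Lemma box2 (u c1 d1 c2 d2 : R) : ltR c1 u -> ltR u d1 -> ltR c2 u -> ltR u d2 ->
  exists c d, ltR c u /\ ltR u d /\ forall s, ltR c s -> ltR s d ->
     (ltR c1 s /\ ltR s d1) /\ (ltR c2 s /\ ltR s d2).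
Proof.
move=> h1 h2 h3 h4.
have [c [hc1 [hc2 hc3]]] : exists c, ltR c u /\ le_R ltR c1 c /\ le_R ltR c2 c.
  case: (Rtot hR c1 c2) => [l|[e|l]].
  - by exists c2; split => //; split; [right|left].
  - by exists c2; split => //; split; left.
  - by exists c1; split => //; split; [left|right].
have [d [hd1 [hd2 hd3]]] : exists d, ltR u d /\ le_R ltR d d1 /\ le_R ltR d d2.
  case: (Rtot hR d1 d2) => [l|[e|l]].
  - by exists d1; split => //; split; [left|right].
  - by exists d1; split => //; split; left.
  - by exists d2; split => //; split; [right|left].
exists c, d; split => //; split => // s cs sd.
split; split.
- exact: (le_lt hR hc2 cs).
- exact: (lt_le hR sd hd2).
- exact: (le_lt hR hc3 cs).
- exact: (lt_le hR sd hd3).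
Qed.

Lemma sep_lt (G H : R -> R) (u : R) : contW G u -> contW H u ->
  (forall c d, ltR c u -> ltR u d -> exists s, Dom s /\ ltR c s /\ ltR s d /\ G s = H s) ->
  ~ ltR (G u) (H u).
Proof.
move=> cG cH dens lt.
set m := halfL L *: (G u + H u).
have m1 := mid_l hL hR lt; have m2 := mid_r hL hR lt.
have [c1 [d1 [hc1 [hd1 h1]]]] := cG _ _ (lt_subd hR hd0 (G u)) m1.
have [c2 [d2 [hc2 [hd2 h2]]]] := cH _ _ m2 (lt_addd hR hd0 (H u)).
have [c [d [hc [hd hcd]]]] := box2 hc1 hd1 hc2 hd2.
have [s [ds [cs [sd e]]]] := dens _ _ hc hd.
have [[k1 k2] [k3 k4]] := hcd _ cs sd.
have := proj2 (h1 s ds k1 k2); have := proj1 (h2 s ds k3 k4); rewrite e => p1 p2.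
exact: (Rirr hR (Rtr hR p2 p1)).
Qed.

Lemma sep_eq (G H : R -> R) (u : R) : contW G u -> contW H u ->
  (forall c d, ltR c u -> ltR u d -> exists s, Dom s /\ ltR c s /\ ltR s d /\ G s = H s) ->
  G u = H u.
Proof.
move=> cG cH dens.
case: (Rtot hR (G u) (H u)) => [l|[//|l]].
  by case: (sep_lt cG cH dens l).
have dens' : forall c d, ltR c u -> ltR u d -> exists s, Dom s /\ ltR c s /\ ltR s d /\ H s = G s.
  by move=> c d h1 h2; have [s [? [? [? ?]]]] := dens c d h1 h2; exists s.
by case: (sep_lt cH cG dens' l).
Qed.

Lemma contW_opp F u : contW F u -> contW (fun t => - F t) u.
Proof.
move=> cF a b h1 h2.
have e1 : ltR (- b) (F u) by have := Ropp hR h2; rewrite opprK.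
have e2 : ltR (F u) (- a) by have := Ropp hR h1; rewrite opprK.
have [c [d [hc [hd h]]]] := cF _ _ e1 e2.
exists c, d; split => //; split => // s ds cs sd.
have [k1 k2] := h s ds cs sd; split.
- by have := Ropp hR k2; rewrite opprK.
- by have := Ropp hR k1; rewrite opprK.
Qed.

Lemma scaleVK (l : L) (x : R) : l != 0 -> l^-1 *: (l *: x) = x.
Proof. by move=> h; rewrite scalerA mulVr ?scale1r //; apply: (Lunit hL). Qed.
Lemma scaleKV (l : L) (x : R) : l != 0 -> l *: (l^-1 *: x) = x.
Proof. by move=> h; rewrite scalerA mulrV ?scale1r //; apply: (Lunit hL). Qed.

Lemma contW_pos (l : L) (k : R) u : ltL 0 l -> contW (fun t => l *: t + k) u.
Proof.
move=> hl a b h1 h2.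
have lnz := Lnz hL hl; have li := Linv hL hl.
exists (l^-1 *: (a - k)), (l^-1 *: (b - k)); split; [|split].
- rewrite -[u](scaleVK u lnz); apply: (Rscale hR li).
  by have := RaddR hR (- k) h1; rewrite addrK.
- rewrite -[u](scaleVK u lnz); apply: (Rscale hR li).
  by have := RaddR hR (- k) h2; rewrite addrK.
- move=> s _ cs sd; split.
  + have := Rscale hR hl cs; rewrite scaleKV // => h.
    by have := RaddR hR k h; rewrite subrK.
  + have := Rscale hR hl sd; rewrite scaleKV // => h.
    by have := RaddR hR k h; rewrite subrK.
Qed.

Lemma contW_aff (l : L) (k : R) u : contW (fun t => l *: t + k) u.
Proof.
case: (Ltot hL l 0) => [ln|[->|lp]]; last 2 first.
- move=> a b h1 h2; exists (u - d0), (u + d0); split; first exact: (lt_subd hR hd0).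
  split; first exact: (lt_addd hR hd0).
  by move=> s _ _ _; move: h1 h2; rewrite !scale0r.
- exact: contW_pos.
have -> : (fun t => l *: t + k) = (fun t => - ((- l) *: t + (- k))).
  by apply: functional_extensionality => t; rewrite scaleNr opprD !opprK.
apply: contW_opp; apply: contW_pos; exact: (Lneg hL ln).
Qed.

End Cont.


Section Key.
Variables (L : unitRingType) (ltL : L -> L -> Prop) (R : lmodType L) (ltR : R -> R -> Prop).
Hypothesis hL : ordered_division_ring ltL.
Hypothesis hR : ordered_vector_space ltL ltR.
Variable d0 : R.
Hypothesis hd0 : ltR 0 d0.

Definition absL (l : L) : L := if excluded_middle_informative (ltL l 0) then - l else l.
Definition sumL (l : list L) : L := List.fold_right (fun x acc => x + acc) 0 l.

Lemma abs_pm (l : L) : leL ltL 0 (absL l - l) /\ leL ltL 0 (absL l + l) /\ leL ltL 0 (absL l).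
Proof.
rewrite /absL; case: excluded_middle_informative => h.
  have h' := Lneg hL h.
  split; first by right; apply: Ladd0.
  by split; [left; rewrite addNr | right].
case: (Ltot hL l 0) => [//|[el|hp]].
  by subst l; rewrite subrr addr0; split; [left|split; left].
split; first by left; rewrite subrr.
by split; right => //; apply: Ladd0.
Qed.

Lemma sum_nonneg (T : Type) (h : T -> L) l : (forall b, leL ltL 0 (h b)) ->
  leL ltL 0 (sumL (List.map h l)).
Proof. move=> hb; elim: l => [|b l ih] /=; first by left. exact: leLadd0. Qed.

Lemma sum_split (T : Type) (h : T -> L) l a : (forall b, leL ltL 0 (h b)) -> List.In a l ->
  exists rest, leL ltL 0 rest /\ sumL (List.map h l) = h a + rest.
Proof.
move=> hb; elim: l => [[]|b l ih] /= [eb|ha].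
  by subst; exists (sumL (List.map h l)); split => //; apply: sum_nonneg.
have [r [r1 r2]] := ih ha.
exists (h b + r); split; first exact: leLadd0.
by rewrite r2 addrCA.
Qed.

Lemma le_of_sub (p q : R) : le_R ltR 0 (p - q) -> le_R ltR q p.
Proof. case=> [e|h]; last by right; apply: (Rsub0' hR).
by left; move/eqP: e; rewrite eq_sym subr_eq0 => /eqP ->. Qed.

Lemma scale_nonneg (m : L) (w : R) : leL ltL 0 m -> ltR 0 w -> le_R ltR 0 (m *: w).
Proof. case=> [<-|h] hw; first by left; rewrite scale0r. by right; apply: (Rscale_pp hR). Qed.

Lemma le_add (a b c d : R) : le_R ltR a b -> le_R ltR c d -> le_R ltR (a + c) (b + d).
Proof.
case=> [<-|h1]; case=> [<-|h2]; first by left.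
- by right; apply: (RaddL hR).
- by right; apply: (RaddR hR).
- by right; apply: (Radd2 hR).
Qed.

Section Psi.
Variable psi : formula R.
Variables vt vz : nat.
Hypothesis hq : qf psi.
Hypothesis hv : vt != vz.

Definition cz (a : term R * term R) : L := acoef vz a.
Definition ct (a : term R * term R) : L := acoef vt a.
Definition lam (a : term R * term R) : L := - ((cz a)^-1 * ct a).
Definition ell (e0 : nat -> R) (a : term R * term R) (t : R) : R := rootv (upd e0 vt t) vz a.
Definition Kc : L := sumL (List.map (fun a => absL (lam a)) (atoms psi)).

Lemma Kc_ok a : List.In a (atoms psi) -> leL ltL 0 (Kc - lam a) /\ leL ltL 0 (Kc + lam a).
Proof.
move=> ha.
have [r [r1 r2]] := @sum_split _ (fun a => absL (lam a)) (atoms psi) a (fun b => proj2 (proj2 (abs_pm (lam b)))) ha.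
rewrite /Kc r2 /=; have [p1 [p2 _]] := abs_pm (lam a).
split.
- by rewrite addrAC; apply: leLadd0.
- by rewrite addrAC; apply: leLadd0.
Qed.

Lemma ell_aff e0 a t : ell e0 a t = lam a *: t + ell e0 a 0.
Proof.
have ar : forall s, arest (upd e0 vt s) vz a = ct a *: s + arest (upd e0 vz 0) vt a.
  move=> s; rewrite /arest (upd_comm e0 s 0 hv).
  by rewrite (adecomp (upd (upd e0 vz 0) vt s) vt a) upd_same arest_upd.
rewrite /ell /rootv !ar scaler0 add0r /lam scalerDr opprD scaleNr scalerA.
by rewrite -/(cz a) -/(ct a).
Qed.

Section G.
Variable e0 : nat -> R.
Variable q : R.
Variable g : R -> R.
Hypothesis hq0 : le_R ltR 0 q.
Definition Dom (s : R) := le_R ltR 0 s /\ le_R ltR s q.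
Hypothesis hg : forall t z, Dom t -> (holds ltR (upd (upd e0 vt t) vz z) psi <-> z = g t).
Hypothesis hcont : forall t, Dom t -> contW ltR Dom g t.

Lemma pointA t : Dom t -> exists a, List.In a (atoms psi) /\ cz a != 0 /\ g t = ell e0 a t.
Proof.
move=> dt; apply: NNPP => hno.
have hneq : forall a, List.In a (atoms psi) -> cz a != 0 -> ell e0 a t <> g t.
  by move=> a ha hc e; apply: hno; exists a.
set E := upd e0 vt t.
have P0 : holds ltR (upd E vz (g t)) psi by apply/hg.
have [z' [gz hs]] : exists z', ltR (g t) z' /\
   forall a, List.In a (atoms psi) -> acoef vz a != 0 -> sside ltR (g t) z' (rootv E vz a).
  case: (classic (exists a, List.In a (atoms psi) /\ (cz a != 0 /\ ltR (g t) (ell e0 a t)))) => [hex|hnex].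
    have [b [hb [[hb1 hb2] hb3]]] := list_min hR (fun a => ell e0 a t) hex.
    exists (halfL L *: (g t + ell e0 b t)); split; first exact: (mid_l hL hR hb2).
    move=> a ha hc; case: (Rtot hR (g t) (rootv E vz a)) => [l|[e|l]].
    - left; split => //; apply: (lt_le hR (mid_r hL hR hb2)); exact: hb3.
    - by case: (hneq a ha hc).
    - by right; split => //; apply: (Rtr hR l (mid_l hL hR hb2)).
  exists (g t + d0); split; first exact: (lt_addd hR hd0).
  move=> a ha hc; case: (Rtot hR (g t) (rootv E vz a)) => [l|[e|l]].
  - by case: hnex; exists a.
  - by case: (hneq a ha hc).
  - by right; split => //; apply: (Rtr hR l (lt_addd hR hd0 _)).
have := proj1 (SI hL hR (x := g t) (y := z') hq hs) P0.
rewrite hg // => ez; rewrite ez in gz; exact: (Rirr hR gz).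
Qed.

Definition psiA (a : term R * term R) : formula R := fsubst vz (rootT vz a) psi.
Lemma S_spec a t : Dom t -> (holds ltR (upd e0 vt t) (psiA a) <-> ell e0 a t = g t).
Proof. by move=> dt; rewrite /psiA holds_subst // teval_rootT; apply: hg. Qed.

Definition BP : list R :=
  List.flat_map (fun a => List.map (fun b => rootv e0 vt b) (atoms (psiA a))) (atoms psi).

Lemma S_const a t1 t2 : List.In a (atoms psi) -> (forall r, List.In r BP -> sside ltR t1 t2 r) ->
  (holds ltR (upd e0 vt t1) (psiA a) <-> holds ltR (upd e0 vt t2) (psiA a)).
Proof.
move=> ha hs; apply: (SI hL hR (qf_fsubst _ _ hq)) => b hb _; apply: hs.
apply/List.in_flat_map; exists a; split => //.
exact: (List.in_map (fun b => rootv e0 vt b)).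
Qed.

Lemma base u v : Dom u -> Dom v -> ltR u v -> (forall r, List.In r BP -> ~ (ltR u r /\ ltR r v)) ->
  exists a, List.In a (atoms psi) /\ g v - g u = lam a *: (v - u).
Proof.
move=> [du1 du2] [dv1 dv2] uv hbp.
set m := halfL L *: (u + v).
have um := mid_l hL hR uv; have mv := mid_r hL hR uv.
have domin : forall s, ltR u s -> ltR s v -> Dom s.
  move=> s h1 h2; split; [right; exact: (le_lt hR du1 h1) | right; exact: (lt_le hR h2 dv2)].
have [a [ha [hc hga]]] := pointA (domin _ um mv).
have Sm : holds ltR (upd e0 vt m) (psiA a) by apply/S_spec; [exact: domin|by []].
have inside : forall s, ltR u s -> ltR s v -> g s = ell e0 a s.
  move=> s h1 h2; apply/esym/(S_spec a (domin _ h1 h2)).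
  apply: (proj1 (@S_const a m s ha _) Sm) => r hr.
  case: (Rtot hR u r) => [ur|[ur|ru]].
  - case: (Rtot hR r v) => [rv|[rv|vr]]; first by case: (hbp r hr).
    + by left; subst r; split.
    + by left; split; [exact: (Rtr hR mv vr) | exact: (Rtr hR h2 vr)].
  - by right; subst r; split.
  - by right; split; [exact: (Rtr hR ru um) | exact: (Rtr hR ru h1)].
have ellf : ell e0 a = (fun t => lam a *: t + ell e0 a 0).
  by apply: functional_extensionality => t; apply: ell_aff.
have cell : forall w, contW ltR Dom (ell e0 a) w.
  by move=> w; rewrite ellf; apply: (contW_aff hL hR hd0).
have eu : g u = ell e0 a u.
  apply: (sep_eq hL hR hd0 (hcont (conj du1 du2)) (cell u)) => c d cu ud.
  case: (Rtot hR d v) => [dv|[dv|vd]].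
  - exists (halfL L *: (u + d)); have := mid_l hL hR ud; have := mid_r hL hR ud => k1 k2.
    have k3 : ltR (halfL L *: (u + d)) v by exact: (Rtr hR k1 dv).
    by split; [exact: domin|split; [exact: (Rtr hR cu k2)|split => //; exact: inside]].
  - subst d; exists m.
    by split; [exact: domin|split; [exact: (Rtr hR cu um)|split => //; exact: inside]].
  - exists m.
    by split; [exact: domin|split; [exact: (Rtr hR cu um)|split; [exact: (Rtr hR mv vd)|exact: inside]]].
have ev : g v = ell e0 a v.
  apply: (sep_eq hL hR hd0 (hcont (conj dv1 dv2)) (cell v)) => c d cv vd.
  case: (Rtot hR c u) => [cu|[cu|uc]].
  - exists m.
    by split; [exact: domin|split; [exact: (Rtr hR cu um)|split; [exact: (Rtr hR mv vd)|exact: inside]]].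
  - subst c; exists m.
    by split; [exact: domin|split; [by []|split; [exact: (Rtr hR mv vd)|exact: inside]]].
  - exists (halfL L *: (c + v)); have := mid_l hL hR cv; have := mid_r hL hR cv => k1 k2.
    have k3 : ltR u (halfL L *: (c + v)) by exact: (Rtr hR uc k2).
    by split; [exact: domin|split; [by []|split; [exact: (Rtr hR k1 vd)|exact: inside]]].
exists a; split => //.
rewrite eu ev (ell_aff e0 a v) (ell_aff e0 a u) scalerBr.
by rewrite opprD addrACA subrr addr0.
Qed.

Definition Bnd u v := le_R ltR (g v - g u) (Kc *: (v - u)) /\ le_R ltR (g u - g v) (Kc *: (v - u)).

Lemma Bnd_refl u : Bnd u u.
Proof. by rewrite /Bnd !subrr scaler0; split; left. Qed.

Lemma Bnd_trans u w v : Bnd u w -> Bnd w v -> Bnd u v.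
Proof.
move=> [a1 a2] [b1 b2].
have e1 : g v - g u = (g v - g w) + (g w - g u) by rewrite addrA subrK.
have e2 : g u - g v = (g u - g w) + (g w - g v) by rewrite addrA subrK.
have e3 : Kc *: (v - u) = Kc *: (v - w) + Kc *: (w - u) by rewrite -scalerDr addrA subrK.
by rewrite /Bnd e1 e2 e3; split; [apply: le_add | rewrite addrC; apply: le_add].
Qed.

Lemma Bnd_base u v : Dom u -> Dom v -> ltR u v -> (forall r, List.In r BP -> ~ (ltR u r /\ ltR r v)) ->
  Bnd u v.
Proof.
move=> du dv uv hbp; have [a [ha e]] := base du dv uv hbp.
have w0 : ltR 0 (v - u) by exact: (Rsub0 hR uv).
have [k1 k2] := Kc_ok ha.
rewrite /Bnd e; split; apply: le_of_sub.
- by rewrite -scalerBl; apply: scale_nonneg.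
- rewrite -(opprB (g v) (g u)) e -scaleNr -scalerBl opprK; exact: scale_nonneg.
Qed.

Lemma Bnd_ind (E : list R) : forall u v, Dom u -> Dom v -> le_R ltR u v ->
  (forall r, List.In r BP -> ltR u r -> ltR r v -> List.In r E) -> Bnd u v.
Proof.
elim: E => [|e E ih] u v du dv uv hE.
  case: uv => [<-|uv]; first exact: Bnd_refl.
  by apply: Bnd_base => // r hr [h1 h2]; exact: (hE r hr h1 h2).
case: uv => [<-|uv]; first exact: Bnd_refl.
case: (classic (ltR u e /\ ltR e v)) => [[ue ev]|hn].
  have de : Dom e by split; [right; exact: (le_lt hR (proj1 du) ue)|right; exact: (lt_le hR ev (proj2 dv))].
  apply: (Bnd_trans (w := e)).
  - apply: ih => //; first by right.
    move=> r hr h1 h2; case: (hE r hr h1 (Rtr hR h2 ev)) => // er.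
    by subst r; case: (Rirr hR h2).
  - apply: ih => //; first by right.
    move=> r hr h1 h2; case: (hE r hr (Rtr hR ue h1) h2) => // er.
    by subst r; case: (Rirr hR h1).
apply: ih => //; first by right.
move=> r hr h1 h2; case: (hE r hr h1 h2) => // er.
by subst r; case: hn.
Qed.

Lemma Bnd_all : Bnd 0 q.
Proof.
have d0' : Dom 0 by split; [left|].
have dq : Dom q by split; [|left].
exact: (Bnd_ind (E := BP) d0' dq hq0 (fun r hr _ _ => hr)).
Qed.

End G.
End Psi.

Lemma key (psi : formula R) (vt vz : nat) : qf psi -> vt != vz ->
  exists K : L, forall (e0 : nat -> R) (q : R) (g : R -> R),
    le_R ltR 0 q ->
    (forall t z, Dom q t -> (holds ltR (upd (upd e0 vt t) vz z) psi <-> z = g t)) ->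
    (forall t, Dom q t -> contW ltR (Dom q) g t) ->
    le_R ltR (g q - g 0) (K *: q) /\ le_R ltR (g 0 - g q) (K *: q).
Proof.
move=> hq hv; exists (Kc psi vt vz) => e0 q g hq0 hg hc.
have := Bnd_all hq hv hq0 hg hc; by rewrite /Bnd subr0.
Qed.

End Key.


Section Glue.
Variables (L : unitRingType) (R : lmodType L) (ltR : R -> R -> Prop).

Fixpoint exs (l : list nat) (f : formula R) : formula R :=
  match l with nil => f | v :: l' => FEx v (exs l' f) end.

Lemma holds_exs l f : forall e, holds ltR e (exs l f) <->
  exists e', (forall k, ~ List.In k l -> e' k = e k) /\ holds ltR e' f.
Proof.
elim: l => [|v l ih] e /=.
  split; first by move=> h; exists e.
  case=> e' [he h]; have -> : e = e' by apply: functional_extensionality => k; rewrite he.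
  by [].
split.
  case=> r; rewrite -/(upd e v r) ih; case=> e' [he h]; exists e'; split => // k hk.
  rewrite he; last by move=> hh; apply: hk; right.
  by rewrite /upd; case: eqP => // ek; case: hk; left.
case=> e' [he h]; exists (e' v); rewrite -/(upd e v (e' v)) ih; exists e'; split => // k hk.
rewrite /upd; case: eqP => [->//|nk]; apply: he => -[ek|//]; by case: nk.
Qed.

Lemma env_of_val n (w : 'I_n -> R) (o : 'I_n) : env_of w (val o) = w o.
Proof. by rewrite /env_of valK. Qed.

Definition zof N (e : nat -> R) : 'I_N -> R := fun o => e (val o).
Arguments zof : clear implicits.

Lemma env_zof N (e : nat -> R) : (forall k, (N <= k)%N -> e k = 0) -> env_of (zof N e) = e.
Proof.
move=> hb; apply: functional_extensionality => k; rewrite /env_of.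
case: insubP => [o _ <-|hn] //=.
by rewrite hb //; rewrite leqNgt.
Qed.

End Glue.



Theorem mainTheorem9 (L : unitRingType) (ltL : L -> L -> Prop)
    (R : lmodType L) (ltR : R -> R -> Prop)
    (hL : ordered_division_ring ltL) (hR : ordered_vector_space ltL ltR)
    (hnt : exists x : R, x != 0)
    (n : nat) (X : ('I_n -> R) -> Prop)
    (hX : definable ltR X) (hunb : ~ bounded ltR X) :
  ~ definably_contractible ltR X.
Proof.
move=> [p [Xp [AX [_ [q [hq0 [H hH]]]]]]].
move: hH => /= [[f hf] [hcont [hstay [h0 [_ [_ hqx]]]]]].
have [d0 hd0] : exists d0, ltR 0 d0.
  case: hnt => y hy; case: (Rtot hR y 0) => [l|[e|l]].
  - by exists (- y); exact: (Rneg hR l).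
  - by move: hy; rewrite e eqxx.
  - by exists y.
pose N := (1 + n + n)%N.
have bnd : forall i : 'I_n, exists K : L, forall x, X x ->
   le_R ltR (H q x i - H 0 x i) (K *: q) /\ le_R ltR (H 0 x i - H q x i) (K *: q).
  move=> i.
  have hi := ltn_ord i.
  pose vz := (1 + n + i)%N.
  pose Ls := List.map (fun j : nat => (1 + n + j)%N) (List.filter (fun j : nat => (j != val i)%N) (List.seq 0 n)).
  have inLs : forall k, List.In k Ls <-> ((1 + n <= k)%N /\ (k < N)%N /\ k <> vz).
    move=> k; rewrite List.in_map_iff; split.
      case=> j [<- /List.filter_In [/List.in_seq [hj1 hj2] /eqP hji]].
      have hj : (j < n)%N by apply/ltP; rewrite -(add0n n); exact: hj2.
      simpl; split; first by lia. split; first by rewrite /N; clear -hj; lia.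
      by rewrite /vz => e; apply: hji; move: e => /addnI.
    case=> h1 [h2 h3]; exists (k - (1 + n))%N; split; first by lia.
    apply/List.filter_In; split; first by apply/List.in_seq; rewrite /N in h2; lia.
    by apply/eqP => e; apply: h3; rewrite /vz -[nat_of_ord i]/(val i) -e; clear -h1; lia.
  have [psi [qpsi hpsi]] := qe hL hR hd0 (exs Ls f).
  have hv : (0 != vz)%N by rewrite /vz; lia.
  have [K hK] := key hL hR hd0 qpsi hv.
  exists K => x Xx.
  pose xe := env_of x.
  pose E0 := fun (t z : R) (k : nat) => if k == 0%N then t else if (k <= n)%N then xe k.-1
     else if k == vz then z else 0.
  have Eupd : forall t z, upd (upd (E0 0 0) 0 t) vz z = E0 t z.
    move=> t z; apply: functional_extensionality => k; rewrite /upd /E0.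
    case: (eqVneq k vz) => [->|nk].
      have -> : (vz == 0%N) = false by rewrite /vz; lia.
      by have -> : (vz <= n)%N = false by rewrite /vz; lia.
    by case: (k == 0%N).
  have hvn : (vz <= n)%N = false by rewrite /vz; lia.
  have hv0 : (vz == 0%N) = false by rewrite /vz; lia.
  have E0_0 : forall t z, E0 t z 0%N = t by move=> t z; rewrite /E0 eqxx.
  have E0_x : forall t z (j : 'I_n), E0 t z (1 + j)%N = x j.
    move=> t z j; have hj := ltn_ord j; rewrite /E0.
    have -> : (1 + j == 0)%N = false by lia.
    have -> : (1 + j <= n)%N = true by lia.
    by rewrite add1n /= /xe env_of_val.
  have E0_z : forall t z, E0 t z vz = z by move=> t z; rewrite /E0 hv0 hvn eqxx.
  have E0_big : forall t z k, (N <= k)%N -> E0 t z k = 0.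
    move=> t z k hk; rewrite /E0.
    have -> : (k == 0)%N = false by rewrite /N in hk; lia.
    have -> : (k <= n)%N = false by rewrite /N in hk; lia.
    by have -> : (k == vz) = false by rewrite /vz; rewrite /N in hk; lia.
  have notin : forall k, ~ List.In k Ls ->
      k = 0%N \/ (exists j : 'I_n, k = (1 + j)%N) \/ k = vz \/ (N <= k)%N.
    move=> k hk; rewrite inLs in hk.
    case: (eqVneq k 0%N) => [->|k0]; first by left.
    right; case: (leqP k n) => kn.
      left; have hk' : (k.-1 < n)%N by lia.
      by exists (Ordinal hk'); rewrite /=; lia.
    right; case: (ltnP k N) => kN; last by right.
    left; apply: NNPP => nv; apply: hk; split; [lia|split; [lia|exact: nv]].
  pose g := fun s => H s x i.
  have hg : forall t zz, Dom ltR q t -> (holds ltR (upd (upd (E0 0 0) 0%N t) vz zz) psi <-> zz = g t).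
    move=> t zz [dt1 dt2]; rewrite Eupd -hpsi holds_exs; split.
      case=> e' [he hfe].
      have e'0 : e' 0%N = t by rewrite he ?E0_0 // inLs; case; lia.
      have e'x : forall j : 'I_n, e' (1 + j)%N = x j.
        move=> j; have hj := ltn_ord j; rewrite he ?E0_x // inLs; case; lia.
      have e'z : e' vz = zz by rewrite he ?E0_z // inLs; case=> _ [_ []].
      have e'big : forall k, (N <= k)%N -> e' k = 0.
        by move=> k hk; rewrite he ?E0_big // inLs; case=> _ [hk2 _]; rewrite /N in hk hk2; lia.
      have := (hf (zof (N:=N) e')).2; rewrite env_zof // => /(_ hfe) [_ hr].
      have tf : tfirst (lpart (zof (N:=N) e')) = t by rewrite /tfirst /lpart /zof /=.
      have tl : tlast (lpart (zof (N:=N) e')) = x.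
        by apply: functional_extensionality => j; rewrite /tlast /lpart /zof /= e'x.
      have := hr i; rewrite tf tl /rpart /zof /= -/vz e'z => ->; by [].
    move=> ->.
    pose e' := fun k => if (k < N)%N then (if k == 0%N then t else if (k <= n)%N then xe k.-1
                          else env_of (H t x) (k - (1 + n))%N) else 0.
    have e'0 : e' 0%N = t by rewrite /e' (_ : (0 < N)%N = true) //; rewrite /N; lia.
    have e'x : forall j : 'I_n, e' (1 + j)%N = x j.
      move=> j; have hj := ltn_ord j; rewrite /e'.
      have -> : (1 + j < N)%N = true by rewrite /N; lia.
      have -> : (1 + j == 0)%N = false by lia.
      have -> : (1 + j <= n)%N = true by lia.
      by rewrite add1n /= /xe env_of_val.
    have e'y : forall j : 'I_n, e' (1 + n + j)%N = H t x j.
      move=> j; have hj := ltn_ord j; rewrite /e'.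
      have -> : (1 + n + j < N)%N = true by rewrite /N; lia.
      have -> : (1 + n + j == 0)%N = false by lia.
      have -> : (1 + n + j <= n)%N = false by lia.
      by rewrite addKn env_of_val.
    have e'big : forall k, (N <= k)%N -> e' k = 0.
      by move=> k hk; rewrite /e' (_ : (k < N)%N = false) //; lia.
    exists e'; split.
      move=> k hk; case: (notin k hk) => [->|[[j ->]|[->|hb]]].
      - by rewrite e'0 E0_0.
      - by rewrite e'x E0_x.
      - by rewrite /vz e'y -/vz E0_z.
      - by rewrite e'big // E0_big.
    rewrite -(env_zof (N:=N) e'big); apply: (hf _).1.
    have tf : tfirst (lpart (zof (N:=N) e')) = t by rewrite /tfirst /lpart /zof /=.
    have tl : tlast (lpart (zof (N:=N) e')) = x.
      by apply: functional_extensionality => j; rewrite /tlast /lpart /zof /= e'x.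
    rewrite tf tl; split; first by split; [|split].
    by move=> j; rewrite /rpart /zof /= e'y.
  have hc : forall t, Dom ltR q t -> contW ltR (Dom ltR q) g t.
    move=> t [dt1 dt2] al be h1 h2.
    pose wt := fun (s : R) (o : 'I_(1 + n)) => if (val o == 0)%N then s else xe (val o).-1.
    have tfw : forall s, tfirst (wt s) = s by move=> s; rewrite /tfirst /wt /=.
    have tlw : forall s, tlast (wt s) = x.
      move=> s; apply: functional_extensionality => j; rewrite /tlast /wt /=.
      by rewrite add0n /xe env_of_val.
    pose a0 := fun j : 'I_n => if j == i then al else H t x j - d0.
    pose b0 := fun j : 'I_n => if j == i then be else H t x j + d0.
    have Dw : forall s, Dom ltR q s -> (le_R ltR 0 (tfirst (wt s)) /\ le_R ltR (tfirst (wt s)) q /\ X (tlast (wt s))).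
      by move=> s [s1 s2]; rewrite tfw tlw.
    have hab : forall j, ltR (a0 j) (H (tfirst (wt t)) (tlast (wt t)) j) /\ ltR (H (tfirst (wt t)) (tlast (wt t)) j) (b0 j).
      move=> j; rewrite tfw tlw /a0 /b0; case: (eqVneq j i) => [->|nj].
        by split.
      by split; [exact: (lt_subd hR hd0) | exact: (lt_addd hR hd0)].
    have [c [d [hcd hmain]]] := hcont (wt t) (Dw t (conj dt1 dt2)) a0 b0 hab.
    have [c1 c2] := hcd (lshift n ord0).
    exists (c (lshift n ord0)), (d (lshift n ord0)).
    move: c1 c2; rewrite /wt /= => c1 c2.
    split => //; split => // s ds cs sd.
    have box : forall o, ltR (c o) (wt s o) /\ ltR (wt s o) (d o).
      move=> o; case: (eqVneq (val o) 0%N) => ho.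
        have -> : o = lshift n ord0 by apply: val_inj; rewrite ho.
        by rewrite /wt /=.
      have := hcd o; by rewrite /wt (negbTE ho).
    have := hmain (wt s) (Dw s ds) box i; rewrite tfw tlw /a0 /b0 eqxx.
    by [].
  have [b1 b2] := hK (E0 0 0) q g hq0 hg hc.
  by split.
apply: hunb.
pose Kf := fun i => proj1_sig (constructive_indefinite_description _ (bnd i)).
have hKf : forall i x, X x -> le_R ltR (H q x i - H 0 x i) (Kf i *: q) /\ le_R ltR (H 0 x i - H q x i) (Kf i *: q).
  by move=> i; exact: (proj2_sig (constructive_indefinite_description _ (bnd i))).
exists (fun i => p i - (Kf i *: q + d0)), (fun i => p i + (Kf i *: q + d0)).
move=> x Xx i; have [b1 b2] := hKf i x Xx.
rewrite (hqx x Xx) (h0 x Xx) in b1 b2.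
have lW : forall u W, le_R ltR u W -> ltR u (W + d0).
  move=> u W h; exact: (le_lt hR h (lt_addd hR hd0 W)).
split.
- have := RaddR hR (x i - (Kf i *: q + d0)) (lW _ _ b2).
  by rewrite addrA subrK [_ + (x i - _)]addrC subrK.
- have := RaddR hR (p i) (lW _ _ b1).
  by rewrite subrK addrC.
Qed.
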